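(* Consider the finite-horizon sensor scheduling problem (Problem 1) described in the context, with horizon $K\in\mathbb{Z}_+$ and trade-off parameter $\gamma>0$. Define $Q_K(\mathcal{M}_K)=\Tr(\Sigma_K)$ and, for $k=K-1,\ldots,0$, the $Q$-functions $$Q_k(\mathcal{M}_k)=\Tr(\Sigma_k)+\sum_{m=1}^M\gamma\Tr(\delta_{m,k}\mathbf{C}_m\mathbf{C}_m^T)+\mathbb{E}\Big[\min_{\pi_{k+1}}Q_{k+1}(\mathcal{M}_{k+1})\,\Big|\,\mathcal{M}_k\Big],$$ where $\mathcal{M}_k=\{\Sigma_k,\mathbf{H}_k,\pi_k\}$, $\Sigma_{k+1}=f(\mathcal{M}_k)+\mathbf{W}$, and the conditional expectation is over the fresh channel realization $\mathbf{H}_{k+1}$ (independent of $\mathcal{M}_k$). Then Problem 1 is optimally solved backward in time by these DP recursions (i.e., choosing $\pi_k$ to minimize $Q_k(\mathcal{M}_k)$ at each $k$), and for every $k=K-1,\ldots,0$, $$Q_k(\mathcal{M}_k)=\Tr(\Sigma_k)+\sum_{m=1}^M\gamma\Tr(\delta_{m,k}\mathbf{C}_m\mathbf{C}_m^T)+\Tr(f(\mathcal{M}_k))+(K-k)\Tr(\mathbf{W})+\Delta_k(\mathcal{M}_k)\mathbf{1}_{k\le K-2},$$ where $\Delta_{K-1}(\mathcal{M}_{K-1})=0$ and, for $k\le K-2$, $$\Delta_k(\mathcal{M}_k)=\mathbb{E}\Big[\min_{\pi_{k+1}}\Big(\sum_{m=1}^M\gamma\Tr(\delta_{m,k+1}\mathbf{C}_m\mathbf{C}_m^T)+\Tr\big(f(f(\mathcal{M}_k)+\mathbf{W},\pi_{k+1},\mathbf{H}_{k+1})\big)+\Delta_{k+1}\big(f(\mathcal{M}_k)+\mathbf{W},\mathbf{H}_{k+1},\pi_{k+1}\big)\Big)\,\Big|\,\mathcal{M}_k\Big].$$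 Moreover, the optimal solution $\pi_k^*=\{\delta^*_{1,k},\ldots,\delta^*_{M,k}\}$ minimizing $Q_k$ is given by $\delta^*_{m,k}=1$ when $$\Tr\big(f(\Sigma_k,\{\delta^*_{-m},\delta_{m,k}=0\},\mathbf{H}_k)\big)+\Delta_k\big(\Sigma_k,\mathbf{H}_k,\{\delta^*_{-m},\delta_{m,k}=0\}\big)-\Tr\big(f(\Sigma_k,\{\delta^*_{-m},\delta_{m,k}=1\},\mathbf{H}_k)\big)-\Delta_k\big(\Sigma_k,\mathbf{H}_k,\{\delta^*_{-m},\delta_{m,k}=1\}\big)\ge\Tr(\gamma\mathbf{C}_m\mathbf{C}_m^T),$$ where $\delta^*_{-m}=\{\delta^*_{i,k}:1\le i\le M,\ i\ne m\}$.
   Context: Plant: $\mathbf{x}_{k+1}=\mathbf{A}\mathbf{x}_k+\mathbf{w}_k$ with $\mathbf{x}_k\in\mathbb{R}^{S}$, known $\mathbf{A}\in\mathbb{R}^{S\times S}$, and i.i.d. $\mathbf{w}_k\sim\mathcal{N}(\mathbf{0},\mathbf{W})$ with $\mathbf{W}$ positive definite. There are $M$ sensors; sensor $m$ has $N_t$ transmit antennas and observation matrix $\mathbf{C}_m\in\mathbb{R}^{N_t\times S}$, measuring $\mathbf{z}_{m,k}=\mathbf{C}_m\mathbf{x}_k$. The receiver has $N_r$ antennas and receives $\mathbf{y}_k=\sum_{m=1}^M\delta_{m,k}\mathbf{H}_{m,k}\mathbf{z}_{m,k}+\mathbf{v}_k$, with $\mathbf{v}_k\sim\mathcal{N}(\mathbf{0},\mathbf{I}_{N_r})$,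 scheduling variables $\delta_{m,k}\in\{0,1\}$, and channel matrices $\mathbf{H}_{m,k}\in\mathbb{R}^{N_r\times N_t}$ whose entries are i.i.d. $\mathcal{N}(0,1)$, independent across sensors and time slots. Write $\mathbf{H}_k=\{\mathbf{H}_{1,k},\ldots,\mathbf{H}_{M,k}\}$, $\pi_k=\{\delta_{1,k},\ldots,\delta_{M,k}\}$, $\bar{\mathbf{H}}_{m,k}=\mathbf{H}_{m,k}\mathbf{C}_m$. For a positive definite $\Sigma$, define $$f(\Sigma,\pi_k,\mathbf{H}_k)=\mathbf{A}\Big(\Sigma^{-1}+\big(\textstyle\sum_{m=1}^M\delta_{m,k}\bar{\mathbf{H}}_{m,k}\big)^T\big(\sum_{m=1}^M\delta_{m,k}\bar{\mathbf{H}}_{m,k}\big)\Big)^{-1}\mathbf{A}^T,$$ and write $f(\mathcal{M}_k)$ for $f(\Sigma_k,\pi_k,\mathbf{H}_k)$ when $\mathcal{M}_k=\{\Sigma_k,\mathbf{H}_k,\pi_k\}$. The Kalman-filter prior error covariance evolves as $\Sigma_{k+1}=f(\Sigma_k,\pi_k,\mathbf{H}_k)+\mathbf{W}$, starting from a given positive definite $\Sigma_0$. Problem 1: over scheduling policies $\pi=\{\pi_0,\ldots,\pi_{K-1}\}$ (with $\pi_k$ chosen based on $\Sigma_k$ and $\mathbf{H}_k$), minimize $$\mathbb{E}\Big[\sum_{k=0}^{K-1}\Big(\Tr(\Sigma_k)+\sum_{m=1}^M\gamma\Tr(\delta_{m,k}\mathbf{C}_m\mathbf{C}_m^T)\Big)+\Tr(\Sigma_K)\Big],$$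 where $\gamma>0$ trades off estimation accuracy against transmit power. $\mathbf{1}_{\{\cdot\}}$ is the indicator function. *)

(* Defs.v *)
From HB Require Import structures.
From mathcomp Require Import all_boot all_order all_algebra.
From mathcomp Require Import all_classical all_reals all_analysis.
From mathcomp Require Import normal_distribution.

Set Implicit Arguments.
Unset Strict Implicit.
Unset Printing Implicit Defensive.

Import Order.TTheory GRing.Theory Num.Theory.
Local Open Scope ring_scope.

Definition posdef {R : realType} (n : nat) (X : 'M[R]_n) : Prop :=
  X^T = X /\ forall x : 'cV[R]_n, x != 0 -> 0 < (x^T *m X *m x) ord0 ord0.

Definition chan (R : realType) (M Nr Nt : nat) := 'I_M -> 'M[R]_(Nr, Nt).

Definition sched (M : nat) := {ffun 'I_M -> bool}.

(* Iterated expectation over n i.i.d. N(0,1) coordinates x_0,...,x_{n-1}: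
   gauss_iter n g = E[ g(x_0,...,x_{n-1},0,0,...) ]. *)
Fixpoint gauss_iter {R : realType} (n : nat) (g : (nat -> R) -> \bar R) : \bar R :=
  match n with
  | 0 => g (fun _ => 0)
  | n'.+1 => (\int[normal_prob (0:R) 1]_x
                 gauss_iter n' (fun v => g (fun i => if i == n' then x else v i)))%E
  end.

(* Channel built from coordinates: entry (i,j) of H_m is coordinate
   (m * Nr + i) * Nt + j; these are M*Nr*Nt distinct coordinates. *)
Definition chan_of {R : realType} (M Nr Nt : nat) (v : nat -> R) : chan R M Nr Nt :=
  fun m => \matrix_(i < Nr, j < Nt) v ((m * Nr + i) * Nt + j)%N.

Definition EH {R : realType} (M Nr Nt : nat) (F : chan R M Nr Nt -> \bar R) : \bar R :=
  gauss_iter (M * Nr * Nt) (fun v => F (@chan_of R M Nr Nt v)).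

Definition emin {R : realType} (M : nat) (F : sched M -> \bar R) : \bar R :=
  \big[Order.min/+oo%E]_(p : sched M) F p.

Section Model.
Variables (R : realType) (S Nt Nr M : nat).
Variables (A W : 'M[R]_S) (C : 'I_M -> 'M[R]_(Nt, S)) (gamma : R) (K : nat).

Definition Gsum (p : sched M) (H : chan R M Nr Nt) : 'M[R]_(Nr, S) :=
  \sum_(m < M) (p m)%:R *: (H m *m C m).

Definition fKF (Sigma : 'M[R]_S) (p : sched M) (H : chan R M Nr Nt) : 'M[R]_S :=
  A *m invmx (invmx Sigma + (Gsum p H)^T *m Gsum p H) *m A^T.

Definition sched_cost (p : sched M) : R :=
  \sum_(m < M) gamma * \tr ((p m)%:R *: (C m *m (C m)^T)).

(* Q-functions, indexed by the number n = K - k of remaining steps. *)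
Fixpoint Qaux (n : nat) (Sigma : 'M[R]_S) (H : chan R M Nr Nt) (p : sched M) : \bar R :=
  match n with
  | 0 => (\tr Sigma)%:E
  | n'.+1 => ((\tr Sigma + sched_cost p)%:E
             + EH (fun H' => emin (fun p' => Qaux n' (fKF Sigma p H + W) H' p')))%E
  end.

Definition QK (k : nat) := Qaux (K - k)%N.

(* DeltaK-functions, indexed by n = K - 1 - k. *)
Fixpoint Daux (n : nat) (Sigma : 'M[R]_S) (H : chan R M Nr Nt) (p : sched M) : \bar R :=
  match n with
  | 0 => 0%E
  | n'.+1 => EH (fun H' => emin (fun p' =>
               ((sched_cost p')%:E + (\tr (fKF (fKF Sigma p H + W) p' H'))%:E
                + Daux n' (fKF Sigma p H + W) H' p')%E))
  end.

Definition DeltaK (k : nat) := Daux (K.-1 - k)%N.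

Definition sched_policy := nat -> 'M[R]_S -> chan R M Nr Nt -> sched M.

(* Expected sched_cost-to-go of a sched_policy from time K - n with prior covariance Sigma;
   the expectation over the i.i.d. channels H_{K-n},...,H_{K-1} is written as
   iterated expectation (tower property). *)
Fixpoint Jaux (pol : sched_policy) (n : nat) (Sigma : 'M[R]_S) : \bar R :=
  match n with
  | 0 => (\tr Sigma)%:E
  | n'.+1 => EH (fun H => let p := pol (K - n)%N Sigma H in
               ((\tr Sigma + sched_cost p)%:E + Jaux pol n' (fKF Sigma p H + W))%E)
  end.

Definition JK (pol : sched_policy) (Sigma0 : 'M[R]_S) := Jaux pol K Sigma0.

End Model.

Definition sched_set (M : nat) (p : sched M) (m : 'I_M) (b : bool) : sched M :=
  [ffun i => if i == m then b else p i].

(* Main.v *)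
Require Import Defs.
From HB Require Import structures.
From mathcomp Require Import all_boot all_order all_algebra.
From mathcomp Require Import all_classical all_reals all_analysis.
From mathcomp Require Import normal_distribution measurable_realfun.
From mathcomp Require Import ring lra zify.

Import Order.TTheory GRing.Theory Num.Theory.
Local Open Scope ring_scope.

Set Implicit Arguments. Unset Strict Implicit. Unset Printing Implicit Defensive.

Section partL.
Local Open Scope ereal_scope.
Section ints.
Context d (T : measurableType d) (R : realType) (P : probability T R).

Lemma le_int (f g : T -> \bar R) : (forall x, 0 <= f x) -> (forall x, f x <= g x) ->
  \int[P]_x f x <= \int[P]_x g x.
Proof.
move=> f0 fg.
have g0 x : 0 <= g x by exact: le_trans (f0 x) (fg x).
rewrite !ge0_integralTE//.
apply: le_ereal_sup => _ [h hf <-]; exists h => //= x.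
exact: le_trans (hf x) (fg x).
Qed.

Lemma int_cst (c : R) : \int[P]_x c%:E = c%:E.
Proof. rewrite (integral_cst P measurableT c%:E) -[RHS]mule1; congr (_ * _); exact: probability_setT. Qed.

Import HBNNSimple.

Lemma int_shift (f : T -> \bar R) (c : R) : (0 <= c)%R -> (forall x, 0 <= f x) ->
  \int[P]_x (c%:E + f x) = c%:E + \int[P]_x f x.
Proof.
move=> c0 f0.
have cf0 x : 0 <= c%:E + f x by rewrite adde_ge0.
apply/eqP; rewrite eq_le; apply/andP; split.
- rewrite [X in X <= _]ge0_integralTE//.
  apply: ge_ereal_sup => _ [s sf <-] /=.
  pose u := fun x => Num.max (s x - c)%R 0%R.
  have mu : measurable_fun setT u.
    apply: measurable_maxr; last exact: measurable_cst.
    by apply: measurable_funB => //; exact: measurable_cst.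
  have u0 x : 0 <= (u x)%:E by rewrite lee_fin le_max lexx orbT.
  have uf x : (u x)%:E <= f x.
    rewrite /u; have [h|h] := leP (s x - c)%R 0%R.
      exact: f0.
    by rewrite EFinB leeBlDl. 
  rewrite (_ : sintegral P s = \int[P]_x (s x)%:E); last first.
    by rewrite integral_nnsfun// patch_setT.
  apply: (@le_trans _ _ (\int[P]_x ((u x)%:E + c%:E)%E)).
    apply: le_int => x; first by rewrite lee_fin fun_ge0.
    rewrite -EFinD lee_fin /u.
    rewrite -lerBlDr le_max lexx //.
  rewrite ge0_integralD//; last by apply/measurable_EFinP; exact: mu.
  rewrite int_cst addeC; apply: leeD2l.
  exact: le_int.
- rewrite [X in _ + X]ge0_integralTE// -(@leeBrDl _ _ _ c%:E) //.
  apply: ge_ereal_sup => _ [h hf <-] /=; rewrite EFinN leeBrDr//.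
  rewrite (_ : sintegral P h = \int[P]_x (h x)%:E); last first.
    by rewrite integral_nnsfun// patch_setT.
  rewrite -[X in _ + X](int_cst c) -ge0_integralD//; last first.
    by apply/measurable_EFinP; exact: measurable_funTS.
    by move=> x _; rewrite lee_fin fun_ge0.
  apply: le_int => x; first by rewrite adde_ge0 // lee_fin fun_ge0.
  by rewrite addeC leeD2l.
Qed.
End ints.


Section gi.
Variable R : realType.
Local Notation GI := (@gauss_iter R).

Lemma GI_cst n (c : R) : GI n (fun _ => c%:E) = c%:E.
Proof. elim: n => //= n IH; rewrite IH; exact: int_cst. Qed.

Lemma GI_ge0 n g : (forall v, 0 <= g v) -> 0 <= GI n g.
Proof.
elim: n g => //= n IH g g0.
by apply: integral_ge0 => x _; apply: IH.
Qed.

Lemma GI_le n g1 g2 : (forall v, 0 <= g1 v) -> (forall v, g1 v <= g2 v) ->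
  GI n g1 <= GI n g2.
Proof.
elim: n g1 g2 => //= n IH g1 g2 g0 g12.
apply: le_int => x; first exact: GI_ge0.
exact: IH.
Qed.

Lemma GI_shift n g (c : R) : (0 <= c)%R -> (forall v, 0 <= g v) ->
  GI n (fun v => c%:E + g v) = c%:E + GI n g.
Proof.
move=> c0; elim: n g => //= n IH g g0.
under eq_integral do rewrite IH //.
by rewrite int_shift // => x; exact: GI_ge0.
Qed.

Lemma EH_cst M Nr Nt (c : R) : EH (M:=M) (Nr:=Nr) (Nt:=Nt) (fun _ => c%:E) = c%:E.
Proof. exact: GI_cst. Qed.
Lemma EH_ge0 M Nr Nt (F : chan R M Nr Nt -> \bar R) : (forall H, 0 <= F H) -> 0 <= EH F.
Proof. by move=> F0; apply: GI_ge0. Qed.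
Lemma EH_le M Nr Nt (F G : chan R M Nr Nt -> \bar R) : (forall H, 0 <= F H) ->
  (forall H, F H <= G H) -> EH F <= EH G.
Proof. by move=> F0 FG; apply: GI_le. Qed.
Lemma EH_shift M Nr Nt (F : chan R M Nr Nt -> \bar R) (c : R) : (0 <= c)%R ->
  (forall H, 0 <= F H) -> EH (fun H => c%:E + F H) = c%:E + EH F.
Proof. by move=> c0 F0; rewrite /EH GI_shift. Qed.
End gi.

End partL.

Section mx.
Variable R : realType.

Definition psd n (X : 'M[R]_n) : Prop :=
  X^T = X /\ forall x : 'cV[R]_n, 0 <= (x^T *m X *m x) ord0 ord0.

Lemma gram_ge0 n (y : 'cV[R]_n) : 0 <= (y^T *m y) ord0 ord0.
Proof.
rewrite mxE; apply: sumr_ge0 => i _; rewrite mxE -expr2; exact: sqr_ge0.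
Qed.

Lemma posdef_unit n (X : 'M[R]_n) : posdef X -> X \in unitmx.
Proof.
move=> [_ hX]; rewrite unitmxE unitfE; apply/negP => /det0P [v v0 vX].
have := hX v^T; rewrite trmx_eq0 trmxK vX mul0mx mxE ltxx.
by move/(_ v0).
Qed.

Lemma posdef_inv n (X : 'M[R]_n) : posdef X -> posdef (invmx X).
Proof.
move=> hX; have uX := posdef_unit hX; case: hX => sX hX.
split; first by rewrite trmx_inv sX.
move=> x x0; set y := invmx X *m x.
have xe : x = X *m y by rewrite /y mulmxA mulmxV // mul1mx.
have y0 : y != 0 by apply: contraNneq x0 => y0; rewrite xe y0 mulmx0.
rewrite xe trmx_mul sX -!mulmxA (mulmxA (invmx X)) mulVmx // mul1mx mulmxA.
exact: hX.
Qed.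

Lemma psd_gram r n (G : 'M[R]_(r, n)) : psd (G^T *m G).
Proof.
split; first by rewrite trmx_mul trmxK.
move=> x; rewrite mulmxA -trmx_mul -mulmxA; exact: gram_ge0.
Qed.

Lemma posdef_addr n (X Y : 'M[R]_n) : posdef X -> psd Y -> posdef (X + Y).
Proof.
move=> [sX hX] [sY hY]; split; first by rewrite raddfD /= sX sY.
move=> x x0; rewrite mulmxDr mulmxDl mxE.
apply: (lt_le_trans (hX x x0)); rewrite lerDl; exact: hY.
Qed.

Lemma posdef_addl n (X Y : 'M[R]_n) : psd X -> posdef Y -> posdef (X + Y).
Proof. by move=> hX hY; rewrite addrC; exact: posdef_addr. Qed.

Lemma psd_conj m n (A : 'M[R]_(m, n)) (Y : 'M[R]_n) : posdef Y -> psd (A *m Y *m A^T).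
Proof.
move=> [sY hY]; split; first by rewrite !trmx_mul trmxK sY mulmxA.
move=> x; have -> : x^T *m (A *m Y *m A^T) *m x = (A^T *m x)^T *m Y *m (A^T *m x).
  by rewrite trmx_mul trmxK !mulmxA.
have [->|y0] := eqVneq (A^T *m x) 0; first by rewrite mulmx0 mxE.
exact/ltW/hY.
Qed.

Lemma psd_tr n (X : 'M[R]_n) : psd X -> 0 <= \tr X.
Proof.
move=> [_ hX]; rewrite /mxtrace; apply: sumr_ge0 => i _.
have := hX (delta_mx i 0); rewrite trmx_delta -rowE -colE !mxE.
done.
Qed.

End mx.

Section partE.
Local Open Scope ereal_scope.
Section em.
Variables (R : realType) (M : nat).
Implicit Types F : sched M -> \bar R.

Lemma emin_le F p : emin F <= F p.
Proof. by rewrite /emin (bigD1 p) //= ge_min lexx. Qed.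

Lemma emin_ge F a : (forall p, a <= F p) -> a <= emin F.
Proof.
move=> h; rewrite /emin; elim/big_ind: _ => //; first by rewrite leey.
by move=> x y ax ay; rewrite le_min ax ay.
Qed.

Lemma emin_eq F p : (forall q, F p <= F q) -> emin F = F p.
Proof. by move=> h; apply/le_anti; rewrite emin_le; exact: emin_ge. Qed.

Lemma emin_cst (c : \bar R) : emin (fun _ : sched M => c) = c.
Proof. by rewrite (@emin_eq _ [ffun _ => false]). Qed.

Lemma emin_shift (c : R) F : emin (fun p => c%:E + F p) = c%:E + emin F.
Proof.
apply/le_anti/andP; split; last first.
  by apply: emin_ge => p; apply: leeD2l; exact: emin_le.
rewrite -leeBlDl//; apply: emin_ge => p; rewrite leeBlDl//; exact: emin_le.
Qed.
End em.

End partE.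

Section model.
Variables (R : realType) (S Nt Nr M : nat).
Variables (A W : 'M[R]_S) (C : 'I_M -> 'M[R]_(Nt, S)) (gamma : R).
Hypothesis g0 : 0 < gamma.
Hypothesis pW : posdef W.

Definition p0 : sched M := [ffun _ => false].

Lemma Gsum0 (H : chan R M Nr Nt) : Gsum C p0 H = 0.
Proof. by rewrite /Gsum big1 // => i _; rewrite ffunE scale0r. Qed.

Lemma fKF_p0 Sigma (H H' : chan R M Nr Nt) : fKF A C Sigma p0 H = fKF A C Sigma p0 H'.
Proof. by rewrite /fKF !Gsum0. Qed.

Lemma psd_fKF Sigma p (H : chan R M Nr Nt) : posdef Sigma -> psd (fKF A C Sigma p H).
Proof.
move=> pS; apply: psd_conj; apply: posdef_inv; apply: posdef_addr.
  exact: posdef_inv.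
exact: psd_gram.
Qed.

Lemma posdef_next Sigma p (H : chan R M Nr Nt) : posdef Sigma -> posdef (fKF A C Sigma p H + W).
Proof. by move=> pS; apply: posdef_addl => //; exact: psd_fKF. Qed.

Lemma tr_fKF_ge0 Sigma p (H : chan R M Nr Nt) : posdef Sigma -> 0 <= \tr (fKF A C Sigma p H).
Proof. by move=> pS; apply: psd_tr; exact: psd_fKF. Qed.

Lemma tr_pd_ge0 n (X : 'M[R]_n) : posdef X -> 0 <= \tr X.
Proof.
move=> [sX hX]; apply: psd_tr; split => // x.
have [->|x0] := eqVneq x 0; first by rewrite mulmx0 mxE.
exact/ltW/hX.
Qed.

Lemma cost_ge0 p : 0 <= sched_cost C gamma p.
Proof.
apply: sumr_ge0 => i _; rewrite mxtraceZ; apply: mulr_ge0; first exact: ltW.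
apply: mulr_ge0; first by case: (p i).
have := psd_tr (psd_gram (C i)^T); by rewrite trmxK.
Qed.

Local Open Scope ereal_scope.

Lemma Daux_S n Sigma (H : chan R M Nr Nt) p :
  Daux A W C gamma n.+1 Sigma H p = EH (fun H' : chan R M Nr Nt => emin (fun p' =>
               ((sched_cost C gamma p')%:E + (\tr (fKF A C (fKF A C Sigma p H + W) p' H'))%:E
                + Daux A W C gamma n (fKF A C Sigma p H + W) H' p')%E)).
Proof. reflexivity. Qed.
Lemma Daux_H n Sigma p (H H' : chan R M Nr Nt) :
  fKF A C Sigma p H = fKF A C Sigma p H' ->
  Daux A W C gamma n Sigma H p = Daux A W C gamma n Sigma H' p.
Proof. move=> e; case: n => [|n]; first by []. rewrite !Daux_S e. reflexivity. Qed.
Lemma Daux_fin n Sigma (H : chan R M Nr Nt) p : posdef Sigma ->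
  exists r : R, (0 <= r)%R /\ Daux A W C gamma n Sigma H p = r%:E.
Proof.
elim: n Sigma H p => [|n IH] Sigma H p pS; first by exists 0%R.
set D := Daux _ _ _ _ _ _ _ _.
rewrite /D Daux_S; clear D.
set D := EH _.
have pS' := posdef_next p H pS.
have D0 : 0 <= D.
  apply: EH_ge0 => H'; apply: emin_ge => p'.
  have [r [r0 ->]] := IH _ H' p' pS'.
  by rewrite -!EFinD lee_fin !addr_ge0 // ?cost_ge0 // tr_fKF_ge0.
have [r [r0 er]] := IH _ H p0 pS'.
have Dle : D <= (sched_cost C gamma p0 + \tr (fKF A C (fKF A C Sigma p H + W) p0 H) + r)%R%:E.
  rewrite -(@EH_cst R M Nr Nt).
  apply: EH_le => H'.
    apply: emin_ge => p'.
    have [r' [r0' ->]] := IH _ H' p' pS'.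
    by rewrite -!EFinD lee_fin !addr_ge0 // ?cost_ge0 // tr_fKF_ge0.
  apply: le_trans (emin_le _ p0) _.
  rewrite (fKF_p0 _ H' H) (Daux_H n (H' := H)) ?er -?EFinD //.
  exact: fKF_p0.
exists (fine D); split; first exact: fine_ge0.
rewrite fineK // ge0_fin_numE //; apply: le_lt_trans Dle _; exact: ltry.
Qed.


Lemma Qaux_S n Sigma (H : chan R M Nr Nt) p :
  Qaux A W C gamma n.+1 Sigma H p = ((\tr Sigma + sched_cost C gamma p)%R%:E
    + EH (fun H' : chan R M Nr Nt => emin (fun p' =>
          Qaux A W C gamma n (fKF A C Sigma p H + W) H' p'))).
Proof. reflexivity. Qed.

Lemma Qaux_0 Sigma (H : chan R M Nr Nt) p : Qaux A W C gamma 0 Sigma H p = (\tr Sigma)%:E.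
Proof. reflexivity. Qed.

Lemma Q_ge0 n Sigma (H : chan R M Nr Nt) p : posdef Sigma -> 0 <= Qaux A W C gamma n Sigma H p.
Proof.
elim: n Sigma H p => [|n IH] Sigma H p pS.
  by rewrite Qaux_0 lee_fin; exact: tr_pd_ge0.
rewrite Qaux_S; apply: adde_ge0.
  by rewrite lee_fin addr_ge0 ?cost_ge0 // tr_pd_ge0.
apply: EH_ge0 => H'; apply: emin_ge => p'; apply: IH; exact: posdef_next.
Qed.

Lemma Q_closed n Sigma (H : chan R M Nr Nt) p : posdef Sigma ->
  Qaux A W C gamma n.+1 Sigma H p =
  (\tr Sigma + sched_cost C gamma p + \tr (fKF A C Sigma p H) + n.+1%:R * \tr W)%R%:E
  + Daux A W C gamma n Sigma H p.
Proof.
elim: n Sigma H p => [|n IH] Sigma H p pS.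
  rewrite Qaux_S.
  have -> : (fun H' : chan R M Nr Nt => emin (fun p' =>
          Qaux A W C gamma 0 (fKF A C Sigma p H + W) H' p'))
     = fun _ => (\tr (fKF A C Sigma p H + W))%:E.
    by apply/funext => H'; exact: (@emin_cst _ M (\tr _)%:E).
  rewrite EH_cst adde0 -EFinD mxtraceD; congr EFin; ring.
have pS' := posdef_next p H pS.
set c := (\tr (fKF A C Sigma p H + W) + n.+1%:R * \tr W)%R.
have c0 : (0 <= c)%R.
  by rewrite /c addr_ge0 ?mulr_ge0 ?tr_pd_ge0.
have E : (fun H' : chan R M Nr Nt => emin (fun p' =>
          Qaux A W C gamma n.+1 (fKF A C Sigma p H + W) H' p'))
   = (fun H' => c%:E + emin (fun p' =>
          ((sched_cost C gamma p')%:E + (\tr (fKF A C (fKF A C Sigma p H + W) p' H'))%:E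
           + Daux A W C gamma n (fKF A C Sigma p H + W) H' p'))).
  apply/funext => H'; rewrite -emin_shift; congr emin; apply/funext => p'.
  rewrite IH // !addeA -!EFinD; congr (_ + _); congr EFin; rewrite /c; ring.
rewrite Qaux_S E EH_shift //; last first.
  move=> H'; apply: emin_ge => p'.
  have [r [r0 ->]] := Daux_fin n H' p' pS'.
  by rewrite -!EFinD lee_fin !addr_ge0 // ?cost_ge0 // tr_fKF_ge0.
rewrite -Daux_S addeA -EFinD; congr (_ + _); congr EFin; rewrite /c mxtraceD; ring.
Qed.

Variable K : nat.

Lemma Jaux_S pol n Sigma :
  Jaux A W C gamma K pol n.+1 Sigma = EH (fun H : chan R M Nr Nt =>
    ((\tr Sigma + sched_cost C gamma (pol (K - n.+1)%N Sigma H))%R%:E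
     + Jaux A W C gamma K pol n (fKF A C Sigma (pol (K - n.+1)%N Sigma H) H + W))).
Proof. reflexivity. Qed.

Lemma EQ0 Sigma : EH (fun H : chan R M Nr Nt => emin (fun p => Qaux A W C gamma 0 Sigma H p))
  = (\tr Sigma)%:E.
Proof.
have -> : (fun H : chan R M Nr Nt => emin (fun p => Qaux A W C gamma 0 Sigma H p))
     = fun _ => (\tr Sigma)%:E.
  by apply/funext => H'; exact: (@emin_cst _ M (\tr _)%:E).
exact: EH_cst.
Qed.

Lemma J_eq (pistar : sched_policy R S Nt Nr M) :
  (forall (k : nat) (Sigma : 'M[R]_S) (H : chan R M Nr Nt) (p : sched M),
        (k < K)%N -> posdef Sigma ->
        (QK A W C gamma K k Sigma H (pistar k Sigma H)
           <= QK A W C gamma K k Sigma H p)%E) ->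
  forall n Sigma, (n <= K)%N -> posdef Sigma ->
  Jaux A W C gamma K pistar n Sigma
  = EH (fun H : chan R M Nr Nt => emin (fun p => Qaux A W C gamma n Sigma H p)).
Proof.
move=> hpi; elim=> [|n IH] Sigma nK pS; first by rewrite EQ0.
rewrite Jaux_S; congr EH; apply/funext => H.
rewrite IH; last 2 first.
- by apply: ltnW.
- exact: posdef_next.
rewrite (@emin_eq _ _ _ (pistar (K - n.+1)%N Sigma H)) ?Qaux_S // => q.
have := hpi (K - n.+1)%N Sigma H q _ pS.
rewrite /QK subKn //; apply; lia.
Qed.

Lemma J_ge (pol : sched_policy R S Nt Nr M) n Sigma : posdef Sigma ->
  EH (fun H : chan R M Nr Nt => emin (fun p => Qaux A W C gamma n Sigma H p))
  <= Jaux A W C gamma K pol n Sigma.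
Proof.
elim: n Sigma => [|n IH] Sigma pS; first by rewrite EQ0.
rewrite Jaux_S.
apply: (@le_trans _ _ (EH (fun H : chan R M Nr Nt =>
   Qaux A W C gamma n.+1 Sigma H (pol (K - n.+1)%N Sigma H)))).
  apply: EH_le => H; last exact: emin_le.
  by apply: emin_ge => q; exact: Q_ge0.
apply: EH_le => H; first exact: Q_ge0.
rewrite Qaux_S; apply: leeD2l; apply: IH; exact: posdef_next.
Qed.
End model.

Unset Implicit Arguments.
Unset Strict Implicit.
Theorem theorem1 (R : realType) (S Nt Nr M K : nat)
  (A W : 'M[R]_S) (C : 'I_M -> 'M[R]_(Nt, S)) (gamma : R) (Sigma0 : 'M[R]_S) :
  0 < gamma -> posdef W -> posdef Sigma0 ->
  (* (i) the DP recursion (minimizing Q_k at every k) solves Problem 1 *)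
  (forall pistar : sched_policy R S Nt Nr M,
     (forall (k : nat) (Sigma : 'M[R]_S) (H : chan R M Nr Nt) (p : sched M),
        (k < K)%N -> posdef Sigma ->
        (QK A W C gamma K k Sigma H (pistar k Sigma H)
           <= QK A W C gamma K k Sigma H p)%E) ->
     JK A W C gamma K pistar Sigma0
       = EH (fun H : chan R M Nr Nt => emin (fun p => QK A W C gamma K 0 Sigma0 H p))
     /\ forall pol : sched_policy R S Nt Nr M,
          (JK A W C gamma K pistar Sigma0 <= JK A W C gamma K pol Sigma0)%E)
  /\
  (* (ii) closed form of the Q-functions *)
  (forall (k : nat) (Sigma : 'M[R]_S) (H : chan R M Nr Nt) (p : sched M),
     (k < K)%N -> posdef Sigma ->
     QK A W C gamma K k Sigma H p
     = ((\tr Sigma + sched_cost C gamma p + \tr (fKF A C Sigma p H) + (K - k)%:R * \tr W)%:E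
        + (if (k.+2 <= K)%N then DeltaK A W C gamma K k Sigma H p else 0))%E)
  /\
  (* (iii) characterization of the optimal schedule *)
  (forall (k : nat) (Sigma : 'M[R]_S) (H : chan R M Nr Nt) (pstar : sched M),
     (k < K)%N -> posdef Sigma ->
     (forall p, (QK A W C gamma K k Sigma H pstar <= QK A W C gamma K k Sigma H p)%E) ->
     forall m : 'I_M,
     let p0 := sched_set pstar m false in
     let p1 := sched_set pstar m true in
     let lhs := ((\tr (fKF A C Sigma p0 H))%:E + DeltaK A W C gamma K k Sigma H p0
                 - (\tr (fKF A C Sigma p1 H))%:E - DeltaK A W C gamma K k Sigma H p1)%E in
     (pstar m = true -> (lhs >= (\tr (gamma *: (C m *m (C m)^T)))%:E)%E)
     /\ (pstar m = false -> (lhs <= (\tr (gamma *: (C m *m (C m)^T)))%:E)%E)).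

Proof.
move=> g0 pW pS0; split; [|split].
- move=> pistar hpi.
  have JE := J_eq g0 pW hpi (leqnn K) pS0.
  split.
    rewrite /JK JE; congr EH; apply/funext => H; congr emin; apply/funext => p.
    by rewrite /QK subn0.
  by move=> pol; rewrite /JK JE; exact: J_ge.
- move=> k Sigma H p hk pS.
  rewrite /QK /DeltaK.
  have -> : (K - k)%N = (K.-1 - k).+1 by lia.
  rewrite Q_closed //.
  case: ifP => h; first by [].
  have -> : (K.-1 - k)%N = 0%N by lia.
  by rewrite adde0.
- move=> k Sigma H pstar hk pS hmin m p0' p1' lhs.
  have hQ q : QK A W C gamma K k Sigma H q = ((\tr Sigma + sched_cost C gamma q
      + \tr (fKF A C Sigma q H) + (K - k)%:R * \tr W)%R%:E
      + Daux A W C gamma (K.-1 - k) Sigma H q)%E.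
    rewrite /QK; have -> : (K - k)%N = (K.-1 - k).+1 by lia.
    exact: Q_closed.
  have [r0 [_ e0]] := Daux_fin A C g0 pW (K.-1 - k) H p0' pS.
  have [r1 [_ e1]] := Daux_fin A C g0 pW (K.-1 - k) H p1' pS.
  have hc : sched_cost C gamma p1' = sched_cost C gamma p0' + \tr (gamma *: (C m *m (C m)^T)).
    rewrite /sched_cost (bigD1 m) //= [in RHS](bigD1 m) //=.
    have -> : \sum_(i < M | i != m) gamma * \tr ((p1' i)%:R *: (C i *m (C i)^T))
        = \sum_(i < M | i != m) gamma * \tr ((p0' i)%:R *: (C i *m (C i)^T)).
      by apply: eq_bigr => i /negbTE hi; rewrite /p1' /p0' !ffunE hi.
    rewrite /p1' /p0' !ffunE eqxx !mxtraceZ /=; ring.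
  split => hm.
  + have ps : pstar = p1'.
      by apply/ffunP => i; rewrite /p1' ffunE; case: eqP => // ->; rewrite hm.
    have := hmin p0'; rewrite ps !hQ e0 e1 -!EFinD lee_fin hc => ineq.
    rewrite /lhs /DeltaK e0 e1 -!EFinN -!EFinD lee_fin; lra.
  + have ps : pstar = p0'.
      by apply/ffunP => i; rewrite /p0' ffunE; case: eqP => // ->; rewrite hm.
    have := hmin p1'; rewrite ps !hQ e0 e1 -!EFinD lee_fin hc => ineq.
    rewrite /lhs /DeltaK e0 e1 -!EFinN -!EFinD lee_fin; lra.
Qed.
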